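(* Let $(\mathcal{G},c)$ be a colored directed acyclic graph with compatible coloring, and assume that $c(i)=c(j)$ implies $(\mathcal{G}_i,c)\cong(\mathcal{G}_j,c)$ for all vertices $i,j$. Then there exists an inverse topological order $\succ$ of $V$ in which each vertex color class forms a consecutive block, i.e. $i\succ j\succ k$ and $c(i)=c(k)$ imply $c(j)=c(i)$.
   Context: $\mathcal{G}=(V,\vec E)$ is a finite DAG; $j\to i$ means $(j,i)\in\vec E$. A coloring is $c:V\cup\vec E\to[r+R]$; compatible means $c(V)\cap c(\vec E)=\emptyset$ and $c(j\to i)=c(l\to k)$ implies $c(i)=c(k)$. $\mathrm{ch}(i)=\{k:i\to k\}$; $(\mathcal{G}_i,c)$ is the colored graph on $\{i\}\cup\mathrm{ch}(i)$ with edges $i\to k$, $k\in\mathrm{ch}(i)$, and colors inherited from $c$; $\cong$ is isomorphism of colored graphs. An inverse topological order is a total order $\succ$ on $V$ such that $j\to i$ implies $j\succ i$. *)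

(* Defs.v *)
From mathcomp Require Import all_boot.
Set Implicit Arguments. Unset Strict Implicit. Unset Printing Implicit Defensive.

(* A finite directed graph on the finite vertex type V; E j i means j -> i. *)

Definition acyclic (V : finType) (E : rel V) : Prop :=
  forall x y : V, E x y -> ~~ connect E y x.

(* A coloring c : V u E -> [n] is given by vertex colors cv and edge colors
   ce (only the values ce j i on edges j -> i are relevant). *)
Definition compatible (V : finType) (E : rel V) (n : nat)
  (cv : V -> 'I_n) (ce : V -> V -> 'I_n) : Prop :=
  (forall (v j i : V), E j i -> cv v != ce j i) /\
  (forall (j i l k : V), E j i -> E l k -> ce j i = ce l k -> cv i = cv k).

Definition ch (V : finType) (E : rel V) (i : V) : {set V} := [set k | E i k].

Definition locV (V : finType) (E : rel V) (i : V) : {set V} := i |: ch E i.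

Definition locE (V : finType) (E : rel V) (i : V) : rel V :=
  fun x y => (x == i) && (y \in ch E i).

Definition loc_iso (V : finType) (E : rel V) (n : nat)
  (cv : V -> 'I_n) (ce : V -> V -> 'I_n) (i j : V) : Prop :=
  exists f : V -> V,
    [/\ {in locV E i &, injective f},
        f @: locV E i = locV E j,
        {in locV E i &, forall x y, locE E i x y = locE E j (f x) (f y)},
        {in locV E i, forall x, cv (f x) = cv x} &
        {in locV E i &, forall x y, locE E i x y -> ce (f x) (f y) = ce x y}].

Definition strict_total_order (V : finType) (succ : rel V) : Prop :=
  [/\ irreflexive succ, transitive succ &
      forall x y : V, x != y -> succ x y || succ y x].

Definition inv_topological (V : finType) (E : rel V) (succ : rel V) : Prop :=
  strict_total_order succ /\ forall j i : V, E j i -> succ j i.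

(* Main.v *)
Require Import Defs.
From mathcomp Require Import all_boot.
From mathcomp Require Import zify.

Section S.
Variables (V : finType) (E : rel V) (n : nat) (cv : V -> 'I_n) (ce : V -> V -> 'I_n).
Hypothesis acyc : acyclic E.
Hypothesis iso : forall i j : V, cv i = cv j -> loc_iso E cv ce i j.

Definition CE : rel 'I_n := fun a b =>
  [exists j, exists i, E j i && (cv j == a) && (cv i == b)].

Lemma CE_child a b v : CE a b -> cv v = a -> exists w, E v w /\ cv w = b.
Proof.
move=> /existsP[j /existsP[i /andP[/andP[Eji /eqP cj] /eqP ci]]] cvv.
have [f [finj fim fE fcv _]] := @iso j v (etrans cj (esym cvv)).
have jin : j \in locV E j by rewrite /locV setU11.
have iin : i \in locV E j by rewrite /locV in_setU1 /ch inE Eji orbT.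
have := fE j i jin iin; rewrite /locE eqxx /ch inE Eji /=.
move=> /esym/andP[/eqP fj]; rewrite inE => Ev.
exists (f i); split=> //.
by rewrite fcv.
Qed.

Lemma CE_path b a : connect CE b a -> forall w, cv w = b ->
  exists u, connect E w u /\ cv u = a.
Proof.
move=> /connectP[p]; elim: p b => [|c p IH] b /=.
  by move=> _ -> w wb; exists w; split.
move=> /andP[Cbc pth] la w wb.
have [x [Ewx xc]] := @CE_child b c w Cbc wb.
have [u [cu ua]] := IH c pth la x xc.
exists u; split => //; exact: connect_trans (connect1 Ewx) cu.
Qed.

Lemma descent (P : pred V) :
  (forall v, P v -> exists x u, E v x /\ connect E x u /\ P u) -> forall v, ~ P v.
Proof.
move=> H v.
move: {2}#|[set y | connect E v y]| (leqnn #|[set y | connect E v y]|) => m.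
elim: m v => [|m IH] v Hc Pv; have [x [u [Evx [cxu Pu]]]] := H v Pv.
  have vin : v \in [set y | connect E v y] by rewrite inE connect0.
  by move: Hc; rewrite leqn0 => /eqP/cards0_eq/setP/(_ v); rewrite vin inE.
apply: (IH u) => //.
have pr : [set y | connect E u y] \proper [set y | connect E v y].
  apply/properP; split.
    apply/subsetP => y; rewrite !inE => uy.
    exact: connect_trans (connect_trans (connect1 Evx) cxu) uy.
  exists v; rewrite !inE ?connect0 //.
  apply/negP => uv.
  by move: (@acyc v x Evx); rewrite (connect_trans cxu uv).
by rewrite -ltnS; apply: leq_trans Hc; apply: proper_card.
Qed.

Lemma no_cycle a b : CE a b -> ~ connect CE b a.
Proof.
move=> Cab Cba.
have [j ja] : exists j, cv j = a.
  by move: Cab => /existsP[j /existsP[i /andP[/andP[_ /eqP cj] _]]]; exists j.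
have D : forall v, cv v == a -> exists x u, E v x /\ connect E x u /\ cv u == a.
  2: by apply: (@descent (fun v => cv v == a) D j); rewrite ja.
move=> v /eqP va.
have [x [Evx xb]] := @CE_child a b v Cab va.
have [u [cxu ua]] := @CE_path b a Cba x xb.
by exists x, u; rewrite ua eqxx.
Qed.

Definition crank (a : 'I_n) := #|[set z | connect CE a z]|.

Lemma crank_lt a b : CE a b -> crank b < crank a.
Proof.
move=> Cab; apply: proper_card; apply/properP; split.
  apply/subsetP => z; rewrite !inE; exact: connect_trans (connect1 Cab).
exists a; rewrite !inE ?connect0 //.
by apply/negP => /(@no_cycle a b Cab).
Qed.
End S.


Theorem lemma7p12 (V : finType) (E : rel V) (r R : nat)
  (cv : V -> 'I_(r + R)) (ce : V -> V -> 'I_(r + R)) :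
  acyclic E ->
  compatible E cv ce ->
  (forall i j : V, cv i = cv j -> loc_iso E cv ce i j) ->
  exists succ : rel V,
    inv_topological E succ /\
    (forall i j k : V, succ i j -> succ j k -> cv i = cv k -> cv j = cv i).
Proof.
move=> acyc _ iso.
pose rk (x : V) := @crank V E _ cv (cv x).
pose c (x : V) := nat_of_ord (cv x).
pose e (x : V) := nat_of_ord (enum_rank x).
exists (fun x y => (rk y < rk x) || (rk y == rk x) && ((c y < c x) || (c y == c x) && (e y < e x))).
split; [split; [split|] |].
- move=> x /=; lia.
- move=> x y z /=; lia.
- move=> x y /= xy.
  have : e x != e y.
    apply: contra xy => /eqP/val_inj/enum_rank_inj ->; exact: eqxx.
  lia.
- move=> j i Eji /=.
  have : @CE V E _ cv (cv j) (cv i).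
    by apply/existsP; exists j; apply/existsP; exists i; rewrite Eji !eqxx.
  move=> /(crank_lt V E (r+R) cv ce acyc iso) => h; rewrite /rk h //.
- move=> i j k /= h1 h2 ik.
  have hr : rk i = rk k by rewrite /rk ik.
  have hc : c i = c k by rewrite /c ik.
  apply: val_inj => /=.
  have : c j = c i by lia.
  done.
Qed.
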